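(* Let $G$ be a graph of girth at least $4$. Then $G$ is fragile if and only if every subgraph $H$ of $G$ either has at most $2$ vertices or admits an independent cutset of size at most $2$.
   Context: All graphs are finite and simple. A graph is $k$-connected if it has at least $k+1$ vertices and no vertex cutset with at most $k-1$ vertices. A graph is fragile if it has no $3$-connected subgraph. A cutset of a graph $H$ is a set $S\subseteq V(H)$ (possibly empty) such that $H\setminus S$ is disconnected; it is independent if no two vertices of $S$ are adjacent. The girth of a graph is the length of its shortest cycle (infinite if acyclic). *)

(* Defs.v *)
From mathcomp Require Import all_boot.
Set Implicit Arguments. Unset Strict Implicit. Unset Printing Implicit Defensive.

Definition simple_graph (T : finType) (e : rel T) : Prop :=
  symmetric e /\ irreflexive e.

Definition subgraph (T : finType) (e : rel T) (S : {set T}) (f : rel T) : Prop :=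
  symmetric f /\ (forall x y, f x y -> e x y) /\
  (forall x y, f x y -> (x \in S) && (y \in S)).

Definition restr (T : finType) (f : rel T) (A : {set T}) : rel T :=
  [rel x y | [&& f x y, x \in A & y \in A]].

Definition disconnected (T : finType) (A : {set T}) (f : rel T) : Prop :=
  exists u v, [/\ u \in A, v \in A & ~~ connect (restr f A) u v].

Definition cutset (T : finType) (S : {set T}) (f : rel T) (X : {set T}) : Prop :=
  X \subset S /\ disconnected (S :\: X) f.

Definition independent (T : finType) (f : rel T) (X : {set T}) : Prop :=
  forall x y, x \in X -> y \in X -> ~~ f x y.

Definition k_connected (T : finType) (k : nat) (S : {set T}) (f : rel T) : Prop :=
  k.+1 <= #|S| /\ ~ (exists X, cutset S f X /\ #|X| <= k.-1).

Definition fragile (T : finType) (e : rel T) : Prop :=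
  ~ (exists S f, subgraph e S f /\ k_connected 3 S f).

(* girth at least 4: no cycle of length 3 (and simple graphs have no
   shorter cycles). *)
Definition girth_ge4 (T : finType) (e : rel T) : Prop :=
  forall x y z, e x y -> e y z -> e z x -> False.

(* Main.v *)
Require Import Defs.
From mathcomp Require Import all_boot.
From Stdlib Require Import Classical.
From mathcomp Require Import zify.

Lemma connect_inv (T : finType) (r : rel T) (P : pred T) x y :
  P x -> (forall a b, P a -> r a b -> P b) -> connect r x y -> P y.
Proof.
move=> Px H /connectP [p pth ->].
elim: p x Px pth => [|z p IH] x Px //= /andP [rxz pth].
exact: IH (H _ _ Px rxz) pth.
Qed.

Lemma restr_sym (T : finType) (f : rel T) A : symmetric f -> symmetric (restr f A).
Proof. by move=> sf x y; rewrite /restr /= sf [X in _ && X]andbC. Qed.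

Lemma get_cut (T : finType) (e : rel T) (S : {set T}) (f : rel T) :
  simple_graph e -> girth_ge4 e -> fragile e -> subgraph e S f -> 3 <= #|S| ->
  exists X, cutset S f X /\ #|X| <= 2.
Proof.
move=> [se ie] g fr [sf [fe fS]] S3.
case: (leqP 4 #|S|) => S4.
  apply: NNPP => nX; apply: fr; exists S, f; split=> //; split=> //.
have [p [q [pS qS pq nf]]] : exists p q, [/\ p \in S, q \in S, p != q & ~~ f p q].
  have /card_gt0P [a aS] : 0 < #|S| by apply: (@leq_trans 3).
  have : 1 < #|S :\ a| by move: S3; rewrite (cardsD1 a) aS.
  case/card_gt1P => b [c [bS cS bc]].
  move: bS cS; rewrite !inE => /andP [ba bS] /andP [ca cS].
  case fab: (f a b); last by exists a, b; rewrite eq_sym ba fab.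
  case fbc: (f b c); last by exists b, c; rewrite bc fbc.
  case fca: (f c a); last by exists c, a; rewrite ca fca.
  by case: (g a b c); apply: fe.
exists (S :\ p :\ q); split; last first.
  have := S4; rewrite (cardsD1 p) pS (cardsD1 q (S :\ p)) !inE eq_sym pq qS /=.
  by move=> h; lia.
split; first by apply: subset_trans (subsetDl _ _) (subsetDl _ _).
exists p, q; split.
- by rewrite !inE eqxx pS /= andbF.
- by rewrite !inE eqxx qS /=.
apply/negP => c.
have := @connect_inv _ _ (pred1 p) _ _ (eqxx p) _ c; rewrite /= eq_sym (negbTE pq).
move=> h; suff : false by []; apply: h => a b /eqP -> /=.
rewrite /restr /= !inE => /and3P [fpb _ /andP [bnot bS]].
move: bnot; rewrite bS !andbT negb_and !negbK => /orP [/eqP bq|/eqP bp].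
  by move: fpb; rewrite bq (negbTE nf).
by rewrite bp eqxx.
Qed.

Lemma key (T : finType) (e : rel T) :
  simple_graph e -> girth_ge4 e -> fragile e ->
  forall n (S : {set T}) (f : rel T), #|S| <= n -> subgraph e S f -> 3 <= #|S| ->
  exists X : {set T}, [/\ cutset S f X, independent f X & #|X| <= 2].
Proof.
move=> sg g fr; have [se ie] := sg.
elim=> [|n IH] S f Sn sub S3; first by move: Sn S3; case: #|S|.
have [X0 [cX0 X02]] := @get_cut _ e S f sg g fr sub S3.
case: (classic (independent f X0)) => Hind; first by exists X0.
have [X0S [u [v [uA vA nuv]]]] := cX0.
have [x [y [xX yX fxy]]] : exists x y, [/\ x \in X0, y \in X0 & f x y].
  apply: NNPP => nE; apply: Hind => x y xX yX; apply/negP => fxy; apply: nE.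
  by exists x, y.
have [sf [fe fS]] := sub.
have xy : x != y by apply/eqP => exy; move: fxy; rewrite exy => /fe; rewrite ie.
have eX : X0 = [set x; y].
  apply/eqP; rewrite eq_sym eqEcard cards2 xy; apply/andP; split=> //.
  by apply/subsetP => w; rewrite !inE => /orP [] /eqP ->.
subst X0.
set X := [set x; y].
have xS : x \in S by apply: (subsetP X0S); rewrite !inE eqxx.
have yS : y \in S by apply: (subsetP X0S); rewrite !inE eqxx orbT.
have xXX : x \in X by rewrite !inE eqxx.
have yXX : y \in X by rewrite !inE eqxx orbT.
set r := restr f (S :\: X).
set C := [set w in S :\: X | connect r u w].
have uC : u \in C by rewrite in_set uA connect0.
have vC : v \notin C by rewrite in_set (negbTE nuv) andbF.
have CX : forall w, w \in C -> (w \in S) && (w \notin X).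
  by move=> w; rewrite in_set in_setD => /andP [/andP [-> ->] _].
have Cclos : forall w w', w \in C -> f w w' -> w' \in S -> w' \notin X -> w' \in C.
  move=> w w' wC fww' w'S w'X; move: wC; rewrite in_set => /andP [wA uw].
  rewrite in_set in_setD w'X w'S /=; apply: connect_trans uw (connect1 _).
  by rewrite /r /restr /= fww' wA in_setD w'X w'S.
case: (leqP #|C| 1) => Csz.
  move/card_le1_eqP: Csz => Csz.
  have Cu : forall w, w \in C -> w = u by move=> w wC; exact: (Csz u w uC wC).
  set Y := [set z in X | f u z].
  have YX : Y \subset X by apply/subsetP => w; rewrite in_set => /andP [].
  have uY : u \notin Y.
    by rewrite in_set; move: uA; rewrite in_setD => /andP [/negbTE -> _].
  have vY : v \notin Y.
    by rewrite in_set; move: vA; rewrite in_setD => /andP [/negbTE -> _].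
  exists Y; split.
  - split; first exact: subset_trans YX X0S.
    exists u, v; split.
    + by rewrite in_setD uY; move: uA; rewrite in_setD => /andP [].
    + by rewrite in_setD vY; move: vA; rewrite in_setD => /andP [].
    apply/negP => c.
    have := @connect_inv _ _ (pred1 u) _ _ (eqxx u) _ c.
    have -> : pred1 u v = false.
      by apply/negbTE/eqP => evu; move: vC; rewrite evu uC.
    move=> h; suff : false by []; apply: h => a b /eqP -> /=.
    rewrite /restr /= => /and3P [fub _]; rewrite in_setD => /andP [bY bS].
    case: (boolP (b \in X)) => bX.
      by move: bY; rewrite in_set bX fub.
    by rewrite (Cu b (Cclos u b uC fub bS bX)).
  - move=> p q; rewrite !in_set => /andP [_ fup] /andP [_ fuq]; apply/negP => fpq.
    by apply: (g u p q); [apply: fe | apply: fe | rewrite se; apply: fe].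
  - by apply: (leq_trans (subset_leq_card YX)); rewrite cards2 ltnS leq_b1.
set S1 := C :|: X.
set f1 := restr f S1.
have S1S : S1 \subset S.
  apply/subsetP => w; rewrite in_setU => /orP [/CX /andP [] //|].
  by apply: (subsetP X0S).
have vX : v \notin X by move: vA; rewrite in_setD => /andP [].
have vS1 : v \notin S1 by rewrite in_setU negb_or vC vX.
have sub1 : subgraph e S1 f1.
  split; first exact: restr_sym.
  by split=> a b; rewrite /f1 /restr /= => /and3P [fab aS bS]; [exact: fe | rewrite aS bS].
have card1 : #|S1| <= n.
  rewrite -ltnS; apply: leq_trans Sn; apply: proper_card; apply/properP.
  split=> //; exists v => //; by move: vA; rewrite in_setD => /andP [].
have S13 : 3 <= #|S1|.
  apply: leq_ltn_trans Csz (proper_card _); apply/properP; split.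
    by apply/subsetP => w wC; rewrite in_setU wC.
  exists x; first by rewrite in_setU xXX orbT.
  by apply/negP => /CX; rewrite xXX andbF.
have [Y [[YS1 [a [b [aA bA nab]]]] indY Y2]] := IH S1 f1 card1 sub1 S13.
set r1 := restr f1 (S1 :\: Y).
have r1sym : symmetric r1 by do 2! apply: restr_sym.
have xS1 : x \in S1 by rewrite in_setU xXX orbT.
have yS1 : y \in S1 by rewrite in_setU yXX orbT.
have [z [zX zY]] : exists z, z \in X /\ z \notin Y.
  case xY: (x \in Y); last by exists x; rewrite xY.
  case yY: (y \in Y); last by exists y; rewrite yY.
  by have := indY x y xY yY; rewrite /f1 /restr /= fxy xS1 yS1.
have XS1 : forall w, w \in X -> w \in S1 by move=> w wX; rewrite in_setU wX orbT.
have toZ : forall a' w, w \in X -> w \notin Y -> connect r1 a' w -> connect r1 a' z.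
  move=> a' w wX wY c; case: (eqVneq w z) => [<- //|wz].
  apply: connect_trans c (connect1 _).
  rewrite /r1 /restr /= /f1 /restr /= !in_setD wY zY !XS1 // !andbT.
  move: wX zX wz; rewrite !inE => /orP [] /eqP -> /orP [] /eqP ->;
    by rewrite ?eqxx // => _; rewrite // sf.
have main : forall a', a' \in S1 :\: Y -> ~~ connect r1 a' z -> disconnected (S :\: Y) f.
  move=> a' aA' naz; exists a', v; split.
  - move: aA'; rewrite !in_setD => /andP [-> /(subsetP S1S) ->] //.
  - rewrite in_setD; move: vA; rewrite in_setD => /andP [_ ->]; rewrite andbT.
    by apply/negP => /(subsetP YS1); apply/negP.
  apply/negP => c.
  have := @connect_inv _ _ [pred w | (w \in S1 :\: Y) && connect r1 a' w] _ _ _ _ c.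
  have -> : [pred w | (w \in S1 :\: Y) && connect r1 a' w] v = false.
    by rewrite /= in_setD (negbTE vS1) andbF.
  move=> h; suff : false by []; apply: h; first by rewrite /= aA' connect0.
  move=> w w' /andP [wA cw]; rewrite /restr /= => /and3P [fww' wSY w'SY].
  have wC : w \in C.
    move: wA; rewrite in_setD in_setU => /andP [wY /orP [//|wX]].
    by move: naz; rewrite (toZ a' w wX wY cw).
  have w'S1 : w' \in S1.
    rewrite in_setU; case: (boolP (w' \in X)) => w'X; first by rewrite orbT.
    move: w'SY; rewrite in_setD => /andP [_ w'S].
    by rewrite (Cclos w w' wC fww' w'S w'X).
  have w'A : w' \in S1 :\: Y.
    by rewrite in_setD w'S1 andbT; move: w'SY; rewrite in_setD => /andP [].
  rewrite /= w'A; apply: connect_trans cw (connect1 _).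
  by rewrite /r1 /restr /= /f1 /restr /= fww' wA w'A w'S1; move: wA; rewrite in_setD => /andP [_ ->].
exists Y; split.
- split; first exact: subset_trans YS1 S1S.
  case: (boolP (connect r1 a z)) => az; last exact: main a aA az.
  apply: (main b bA); apply/negP => bz; move/negP: nab; apply.
  by apply: connect_trans az _; rewrite (sym_connect_sym r1sym).
- move=> p q pY qY; have := indY p q pY qY; apply: contra => fpq.
  by rewrite /f1 /restr /= fpq !(subsetP YS1).
- exact: Y2.
Qed.

Theorem mainTheorem9 (T : finType) (e : rel T) :
  simple_graph e -> girth_ge4 e ->
  (fragile e <->
   (forall (S : {set T}) (f : rel T), subgraph e S f ->
      #|S| <= 2 \/
      exists X : {set T}, [/\ cutset S f X, independent f X & #|X| <= 2])).
Proof.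
move=> sg g; split.
  move=> fr S f sub; case: (leqP #|S| 2) => S3; first by left.
  by right; exact: (@key _ e sg g fr #|S| S f (leqnn _) sub S3).
move=> H [S [f [sub [S4 nX]]]].
case: (H S f sub) => [S2|[X [cX _ X2]]].
  by have := leq_trans S4 S2.
by apply: nX; exists X.
Qed.
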